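(* Let $X_1,\dots,X_n$ be a Hall–Grayson–Grossman basis of vector fields on $\mathbb{R}^n$ (for the free nilpotent Lie algebra of rank $r\ge2$ and step $s\ge2$), and let $\Psi(x)=e^{x_1X_1}\circ e^{x_2X_2}\circ\cdots\circ e^{x_nX_n}(0)$, where $e^{tX}$ denotes the flow of the vector field $X$ at time $t$. Then $\Psi(x)=x$ for all $x\in\mathbb{R}^n$.
   Context: Multi-indices $\mathbb{N}^n$: $|\alpha|$, $\alpha!$, $x^\alpha$. Hall basis of the free nilpotent Lie algebra $\mathfrak g$ (rank $r$, step $s$, dimension $n$): take a basis $X_1,\dots,X_r$ of the first layer (degree 1); inductively the degree-$d$ elements are brackets $[X_i,X_j]$ of earlier elements with $i>j$, $d(i)+d(j)=d$, and, if $X_i$ was constructed as $[X_h,X_k]$, then $k\le j$; list them after lower-degree elements. Strings: $(\ell)$ for $\ell\le r$; for $X_\ell=[X_a,X_b]$, the string of $a$ followed by $b$. With string $(\ell_0,\dots,\ell_h)$, $I(\ell)_j=\#\{1\le p\le h:\ell_p=j\}$; $j\prec\ell$ iff the string of $j$ is an initial segment of that of $\ell$. The Hall–Grayson–Grossman basis is the family of vector fields on $\mathbb{R}^n$ given by $X_i=\sum_{\ell:\,i\prec\ell}\frac{(-1)^{|I(\ell)|}}{I(\ell)!}x^{I(\ell)}\frac{\partial}{\partial x_\ell}$ for $i=1,\dots,r$, and, for $\ell>r$ with $X_\ell$ constructed in the Hall algorithm as $[X_a,X_b]$, $X_\ell=[X_a,X_b]$ (Lie bracket of vector fields). *)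

(* Defs.v *)
From HB Require Import structures.
From mathcomp Require Import all_boot all_order all_algebra.
From mathcomp Require Import all_classical all_reals all_analysis.
Set Implicit Arguments. Unset Strict Implicit. Unset Printing Implicit Defensive.
Import Order.TTheory GRing.Theory Num.Theory.
Import numFieldNormedType.Exports.
Local Open Scope ring_scope.

(* Conventions: indices are 0-based.  The paper's X_1..X_n are our X_0..X_{n-1};
   generators (first layer) are the indices 0..r-1.  For an index l >= r, the
   Hall algorithm constructed X_l = [X_(a l), X_(b l)]. *)

Fixpoint hdeg_fuel (r : nat) (a b : nat -> nat) (fuel l : nat) : nat :=
  match fuel with
  | 0 => 1
  | fuel'.+1 => if (l < r)%N then 1
                else (hdeg_fuel r a b fuel' (a l) + hdeg_fuel r a b fuel' (b l))%N
  end.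
Definition hdeg r a b l := hdeg_fuel r a b l.+1 l.

Fixpoint hstring_fuel (r : nat) (a b : nat -> nat) (fuel l : nat) : seq nat :=
  match fuel with
  | 0 => [:: l]
  | fuel'.+1 => if (l < r)%N then [:: l]
                else rcons (hstring_fuel r a b fuel' (a l)) (b l)
  end.
Definition hstring r a b l := hstring_fuel r a b l.+1 l.

Definition is_hall_basis (r s n : nat) (a b : nat -> nat) : Prop :=
  [/\ [/\ (2 <= r)%N, (2 <= s)%N & (r <= n)%N],
      (* brackets of earlier elements, i > j, Hall condition k <= j *)
      (forall l, (r <= l < n)%N ->
         [/\ (b l < a l)%N, (a l < l)%N & ((r <= a l)%N -> (b (a l) <= b l)%N)]),
      (forall i j, (i <= j < n)%N -> (hdeg r a b i <= hdeg r a b j)%N) /\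
      (forall l, (l < n)%N -> (hdeg r a b l <= s)%N),
      (* each admissible bracket is constructed exactly once *)
      (forall l l', (r <= l < n)%N -> (r <= l' < n)%N ->
         a l = a l' -> b l = b l' -> l = l') &
      (forall i j, (j < i < n)%N -> (hdeg r a b i + hdeg r a b j <= s)%N ->
         ((r <= i)%N -> (b i <= j)%N) ->
         exists l, [/\ (r <= l < n)%N, a l = i & b l = j])].

Section Fields.
Variable R : realType.
Variable n : nat.

Definition vfield := 'rV[R]_n -> 'rV[R]_n.

Definition coord (x : 'rV[R]_n) (p : nat) : R :=
  oapp (fun j : 'I_n => x ord0 j) 0 (insub p).

Definition lie_bracket (X Y : vfield) : vfield :=
  fun x => derive Y x (X x) - derive X x (Y x).

Variables (r : nat) (a b : nat -> nat).

(* I(l) is the multiset of the entries l_1..l_h of the string of l *)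
Definition Iidx (l : nat) : seq nat := behead (hstring r a b l).

Definition hgg_gen (i : nat) : vfield := fun x =>
  \row_(l < n)
    (if prefix (hstring r a b i) (hstring r a b l) then
       (-1) ^+ size (Iidx l) / ((\prod_(j < n) (count_mem (j : nat) (Iidx l))`!)%N)%:R
       * \prod_(p <- Iidx l) coord x p
     else 0).

Fixpoint hgg_fuel (fuel l : nat) : vfield :=
  match fuel with
  | 0 => hgg_gen l
  | fuel'.+1 => if (l < r)%N then hgg_gen l
                else lie_bracket (hgg_fuel fuel' (a l)) (hgg_fuel fuel' (b l))
  end.

Definition hgg (l : nat) : vfield := hgg_fuel l.+1 l.

Definition is_flow (X : vfield) (phi : R -> 'rV[R]_n -> 'rV[R]_n) : Prop :=
  forall p, phi 0 p = p /\
    forall t : R, is_derive t 1 (fun u => phi u p) (X (phi t p)).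

Definition Psi (phi : nat -> R -> 'rV[R]_n -> 'rV[R]_n) (x : 'rV[R]_n) : 'rV[R]_n :=
  foldr (fun i acc => phi i (coord x i) acc) 0 (iota 0 n).

End Fields.

(* Main.v *)
From Pilot Require Import Defs.
From HB Require Import structures.
From mathcomp Require Import all_boot all_order all_algebra.
From mathcomp Require Import all_classical all_reals all_analysis.
From mathcomp Require Import ring lra zify.
Import Order.TTheory GRing.Theory Num.Theory.
Import numFieldNormedType.Exports.
Import Pilot.Defs.
Set Implicit Arguments. Unset Strict Implicit. Unset Printing Implicit Defensive.

Section Comb.
Variables (r s n : nat) (a b : nat -> nat).
Hypothesis H : is_hall_basis r s n a b.

Lemma hab l : (r <= l < n)%N -> [/\ (b l < a l)%N, (a l < l)%N & ((r <= a l)%N -> (b (a l) <= b l)%N)].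
Proof. by case: H => _ h _ _ _; apply: h. Qed.

Lemma habA l : (r <= l)%N -> (l < n)%N -> (a l < l)%N.
Proof. by move=> h1 h2; have [] := @hab l; rewrite ?h1 ?h2. Qed.
Lemma habB l : (r <= l)%N -> (l < n)%N -> (b l < a l)%N.
Proof. by move=> h1 h2; have [] := @hab l; rewrite ?h1 ?h2. Qed.
Lemma habC l : (r <= l)%N -> (l < n)%N -> (r <= a l)%N -> (b (a l) <= b l)%N.
Proof. by move=> h1 h2; have [] := @hab l; rewrite ?h1 ?h2. Qed.

Lemma hr_n : (r <= n)%N.
Proof. by case: H => [[_ _ ?]] _ _ _ _. Qed.

Lemma huniq l l' : (r <= l < n)%N -> (r <= l' < n)%N -> a l = a l' -> b l = b l' -> l = l'.
Proof. by case: H => _ _ _ h _; apply: h. Qed.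

Lemma hs_fuel f1 f2 l : (l < n)%N -> (l < f1)%N -> (l < f2)%N ->
  hstring_fuel r a b f1 l = hstring_fuel r a b f2 l.
Proof.
elim: f1 f2 l => [//|f1 IH] [//|f2] l ln l1 l2 /=.
case: ifP => // lr.
have rl_l : (r <= l)%N by move: lr; rewrite leqNgt; case: ltnP.
have h1 := habB rl_l ln; have h2 := habA rl_l ln; have hh3 := habC rl_l ln.
have an : (a l < n)%N by apply: ltn_trans h2 ln.
have al1 : (a l < f1)%N by apply: leq_trans h2 _; rewrite -ltnS.
have al2 : (a l < f2)%N by apply: leq_trans h2 _; rewrite -ltnS.
by rewrite (IH f2).
Qed.

Lemma hsE l : (l < n)%N -> hstring r a b l =
  if (l < r)%N then [:: l] else rcons (hstring r a b (a l)) (b l).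
Proof.
move=> ln; rewrite /hstring /=; case: ifP => // lr.
have rl_l : (r <= l)%N by move: lr; rewrite leqNgt; case: ltnP.
have hh1 := habB rl_l ln; have h2 := habA rl_l ln; have hh3 := habC rl_l ln.
by rewrite (@hs_fuel l (a l).+1) // ?h2 // ?(ltn_trans h2 ln).
Qed.

Lemma sind (P : nat -> Prop) : (forall l, (forall k, (k < l)%N -> P k) -> P l) -> forall l, P l.
Proof.
move=> h l; have : forall k, (k <= l)%N -> P k.
  elim: l => [|l IH] k.
    by rewrite leqn0 => /eqP ->; apply: h.
  rewrite leq_eqVlt => /orP[/eqP -> |]; last by apply: IH.
  by apply: h => k'; rewrite ltnS; apply: IH.
by apply.
Qed.

Definition hs l := hstring r a b l.
Definition T l := behead (hs l).

Lemma hs_cons l : (l < n)%N -> hs l = head 0%N (hs l) :: T l.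
Proof.
elim/sind: l => l IH ln; rewrite /T /hs hsE //; case: ifP => // lr.
have rl_l : (r <= l)%N by move: lr; rewrite leqNgt; case: ltnP.
have h1 := habB rl_l ln; have h2 := habA rl_l ln; have h3 := habC rl_l ln.
have an : (a l < n)%N by apply: ltn_trans h2 ln.
by rewrite -/(hs (a l)) (IH _ h2 an).
Qed.

Lemma T_rec l : (r <= l)%N -> (l < n)%N -> T l = rcons (T (a l)) (b l) /\ head 0%N (hs l) = head 0%N (hs (a l)).
Proof.
move=> rl ln; rewrite /T /hs hsE // ltnNge rl /=.
have rl_l : (r <= l)%N by move: rl; rewrite leqNgt; case: ltnP.
have h1 := habB rl_l ln; have h2 := habA rl_l ln; have h3 := habC rl_l ln.
have an : (a l < n)%N by apply: ltn_trans h2 ln.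
by rewrite -/(hs (a l)) (hs_cons an).
Qed.

Lemma T_gen l : (l < r)%N -> (l < n)%N -> hs l = [:: l].
Proof. by move=> lr ln; rewrite /hs hsE // lr. Qed.

Lemma hs_props l : (l < n)%N ->
  [/\ (head 0%N (hs l) < r)%N, all (fun x => x < l)%N (T l), sorted leq (T l)
    & ((r <= l)%N -> last 0%N (T l) = b l /\ T l != [::])].
Proof.
elim/sind: l => l IH ln.
case: (ltnP l r) => lr.
  by rewrite /T T_gen //= lr; split.
have rl_l : (r <= l)%N by move: lr; rewrite leqNgt; case: ltnP.
have h1 := habB rl_l ln; have h2 := habA rl_l ln; have h3 := habC rl_l ln.
have an : (a l < n)%N by apply: ltn_trans h2 ln.
have [hd al so la] := IH _ h2 an.
have [-> ->] := T_rec rl_l ln.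
split => //.
- rewrite all_rcons (ltn_trans h1 h2) /=.
  by apply/allP => x /(allP al) /ltn_trans; apply; apply: h2.
- case: (ltnP (a l) r) => alr.
    by rewrite /T T_gen.
  have [lae ne] := la alr.
  case: (T (a l)) so lae ne => // y M so lae _.
  rewrite rcons_cons /= rcons_path; apply/andP; split; first exact: so.
  by move: lae => /= ->; exact: h3.
- by rewrite last_rcons; split => //; case: (T (a l)).
Qed.

Lemma hs_inj l l' : (l < n)%N -> (l' < n)%N -> hs l = hs l' -> l = l'.
Proof.
elim/sind: l l' => l IH l' ln ln' e.
case: (ltnP l r) => lr; case: (ltnP l' r) => lr'.
- by move: e; rewrite !T_gen // => -[].
- move: e; rewrite (T_gen lr ln) (hs_cons ln').
  have [_ _ _ /(_ lr') [_ ne]] := hs_props ln'.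
  by case: (T l') ne => // ? ? _ [].
- move: e; rewrite (T_gen lr' ln') (hs_cons ln).
  have [_ _ _ /(_ lr) [_ ne]] := hs_props ln.
  by case: (T l) ne => // ? ? _ [].
have rl_l : (r <= l)%N by move: lr; rewrite leqNgt; case: ltnP.
have h1 := habB rl_l ln; have h2 := habA rl_l ln; have h3 := habC rl_l ln.
have rl_lp : (r <= l')%N by move: lr'; rewrite leqNgt; case: ltnP.
have h1' := habB rl_lp ln'; have h2' := habA rl_lp ln'; have h3' := habC rl_lp ln'.
have an : (a l < n)%N by apply: ltn_trans h2 ln.
have an' : (a l' < n)%N by apply: ltn_trans h2' ln'.
move: e; rewrite (hs_cons ln) (hs_cons ln').
have [-> ->] := T_rec rl_l ln.
have [-> ->] := T_rec rl_lp ln'.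
rewrite -!rcons_cons -!(hs_cons) // => /rcons_inj [] /IH e1 e2.
apply: huniq; rewrite ?lr ?ln ?lr' ?ln' //.
by apply: e1 => //; apply: h2.
Qed.

Lemma hs_ext m l x rest : (m < n)%N -> (l < n)%N -> hs m = hs l ++ x :: rest -> (x < l)%N.
Proof.
elim/sind: m rest => m IH rest mn ln.
case: (ltnP m r) => mr.
  by rewrite T_gen // (hs_cons ln) => -[_]; case: (T l).
have rl_m : (r <= m)%N by move: mr; rewrite leqNgt; case: ltnP.
have h1 := habB rl_m mn; have h2 := habA rl_m mn; have h3 := habC rl_m mn.
have an : (a m < n)%N by apply: ltn_trans h2 mn.
rewrite (hs_cons mn).
have [-> ->] := T_rec rl_m mn.
rewrite -rcons_cons -hs_cons //.
case/lastP: rest => [|rest y].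
  rewrite cats1 => /rcons_inj [] e <-.
  by rewrite -(hs_inj an ln e).
rewrite -rcons_cons -rcons_cat => /rcons_inj [] e _.
by apply: (IH _ h2 rest).
Qed.

Lemma sorted_split (M : seq nat) l : sorted leq M ->
  M = [seq x <- M | (x < l)%N] ++ [seq x <- M | ~~ (x < l)%N].
Proof.
elim: M => //= x M IH so.
have sM : sorted leq M by move: so; case: M {IH} => // y M /andP[].
case: ifP => xl /=; first by rewrite -IH.
have allx : all (leq x) M by apply: order_path_min so; apply: leq_trans.
have -> : [seq x0 <- M | (x0 < l)%N] = [::].
  apply/eqP; rewrite -[_ == _]negbK -has_filter; apply/hasPn => y /(allP allx) xy.
  by rewrite -leqNgt (leq_trans _ xy) // leqNgt xl.
have -> // : [seq x0 <- M | ~~ (x0 < l)%N] = M.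
apply/all_filterP/allP => y /(allP allx) xy.
by rewrite -leqNgt (leq_trans _ xy) // leqNgt xl.
Qed.

Lemma hs_eq m l : (m < n)%N -> (l < n)%N -> head 0%N (hs m) = head 0%N (hs l) ->
  (forall j, (j < l)%N -> count_mem j (T m) = count_mem j (T l)) -> m = l.
Proof.
move=> mn ln eh ec.
have [_ alm som _] := hs_props mn.
have [_ all_ sol _] := hs_props ln.
have ef : [seq x <- T m | (x < l)%N] = T l.
  apply: (sorted_eq leq_trans anti_leq).
  - exact: sorted_filter leq_trans _ _ som.
  - exact: sol.
  apply/allP => j _; apply/eqP; rewrite count_filter.
  case: (ltnP j l) => jl.
    rewrite -ec //; apply: eq_count => y /=.
    by case: eqP => // ->; rewrite jl.
  rewrite (@eq_count _ _ pred0); last first.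
    by move=> y /=; case: eqP => // ->; rewrite ltnNge jl.
  rewrite count_pred0; apply/esym/eqP; rewrite -leqn0 leqNgt -has_count.
  apply/hasPn => y /(allP all_) yl /=; apply/eqP => e.
  by move: yl; rewrite e ltnNge jl.
have ehs : hs m = hs l ++ [seq x <- T m | ~~ (x < l)%N].
  rewrite (hs_cons mn) (hs_cons ln) eh /= {1}(sorted_split l som) ef //.
case e2 : [seq x <- T m | ~~ (x < l)%N] ehs => [|x rest] ehs.
  by apply: hs_inj; rewrite // ehs cats0.
have := hs_ext mn ln ehs.
have : x \in [seq x <- T m | ~~ (x < l)%N] by rewrite e2 mem_head.
by rewrite mem_filter => /andP[/negbTE ->].
Qed.
End Comb.

Local Open Scope ring_scope.

Section Poly.
Variable R : realType.
Variable n : nat.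
Local Notation V := 'rV[R]_n.

Lemma coordE (x : V) (j : 'I_n) : coord x j = x ord0 j.
Proof. by rewrite /coord valK. Qed.

Lemma coord_ge (x : V) p : (n <= p)%N -> coord x p = 0.
Proof. by move=> np; rewrite /coord insubF // ltnNge np. Qed.

Inductive pe := PC of R | PV of nat | PA of pe & pe | PM of pe & pe.

Fixpoint ev (e : pe) (x : V) : R :=
  match e with
  | PC c => c
  | PV p => coord x p
  | PA e1 e2 => ev e1 x + ev e2 x
  | PM e1 e2 => ev e1 x * ev e2 x
  end.

Fixpoint D (p : nat) (e : pe) : pe :=
  match e with
  | PC _ => PC 0
  | PV q => PC (q == p)%:R
  | PA e1 e2 => PA (D p e1) (D p e2)
  | PM e1 e2 => PA (PM (D p e1) e2) (PM e1 (D p e2))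
  end.

Fixpoint vb (k : nat) (e : pe) : bool :=
  match e with
  | PC _ => true
  | PV q => (q < k)%N
  | PA e1 e2 => vb k e1 && vb k e2
  | PM e1 e2 => vb k e1 && vb k e2
  end.

Lemma ev_dep k e (x y : V) : vb k e -> (forall j, (j < k)%N -> coord x j = coord y j) ->
  ev e x = ev e y.
Proof.
move=> h hj; elim: e h => [c|q|e1 IH1 e2 IH2|e1 IH1 e2 IH2] //=.
- exact: hj.
- by move=> /andP[h1 h2]; rewrite IH1 // IH2.
- by move=> /andP[h1 h2]; rewrite IH1 // IH2.
Qed.

Lemma D_vb k p e : vb k e -> vb k (D p e).
Proof.
elim: e => [c|q|e1 IH1 e2 IH2|e1 IH1 e2 IH2] //= /andP[h1 h2].
- by rewrite IH1 // IH2.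
- by rewrite h1 h2 IH1 // IH2.
Qed.

Lemma vb_le k k' e : (k <= k')%N -> vb k e -> vb k' e.
Proof.
move=> kk; elim: e => [c|q|e1 IH1 e2 IH2|e1 IH1 e2 IH2] //= => [qk||].
- exact: leq_trans qk kk.
- by move=> /andP[h1 h2]; rewrite IH1 // IH2.
- by move=> /andP[h1 h2]; rewrite IH1 // IH2.
Qed.

Lemma D_zero k p e (x : V) : vb k e -> (k <= p)%N -> ev (D p e) x = 0.
Proof.
move=> h kp; elim: e h => [c|q|e1 IH1 e2 IH2|e1 IH1 e2 IH2] //= => [qk||].
- by case: eqP => // e; move: qk; rewrite e ltnNge kp.
- by move=> /andP[h1 h2]; rewrite IH1 // IH2 // addr0.
- by move=> /andP[h1 h2]; rewrite IH1 // IH2 // mul0r mulr0 addr0.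
Qed.

Lemma is_derive_coord (x v : V) (q : nat) :
  is_derive x v (fun y => coord y q) (coord v q).
Proof.
case: (ltnP q n) => qn; last first.
  rewrite coord_ge // (_ : (fun y => coord y q) = cst 0); first exact: is_derive_cst.
  by apply/funext => y; rewrite coord_ge.
pose j := Ordinal qn.
have -> : (fun y : V => coord y q) = (fun y : V => (id y) ord0 j).
  by apply/funext => y; rewrite (coordE y j).
have dI := (@derivable_id _ V x v).
have e : v ord0 j = 'D_v (fun t : V => id t ord0 j) x.
  have := derive_mx dI => /(congr1 (fun M : 'M[R]_(1,n) => M ord0 j)) /=.
  by rewrite mxE derive_id.
apply: DeriveDef; first by move/derivable_mxP: dI; apply.
by rewrite -e (coordE v j).
Qed.

Lemma ev_is_derive e (x v : V) :
  is_derive x v (ev e) (\sum_(p < n) coord v p * ev (D p e) x).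
Proof.
elim: e => [c|q|e1 IH1 e2 IH2|e1 IH1 e2 IH2].
- rewrite big1 => [|p _]; last by rewrite /= mulr0.
  rewrite (_ : ev (PC c) = cst c); first exact: is_derive_cst.
  by apply/funext.
- rewrite /=.
  have -> : \sum_(p < n) coord v p * ((q == p)%:R) = coord v q.
    case: (ltnP q n) => qn.
      rewrite (bigD1 (Ordinal qn)) //= eqxx mulr1 big1 ?addr0 // => p /eqP pq.
      by case: eqP => // e; [exfalso; apply: pq; apply: val_inj; rewrite /= e|rewrite mulr0].
    rewrite coord_ge // big1 // => p _; case: eqP => [e|]; last by rewrite mulr0.
    by move: (ltn_ord p); rewrite -e ltnNge qn.
  exact: is_derive_coord.
- rewrite (_ : ev (PA e1 e2) = ev e1 + ev e2); last by apply/funext.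
  apply: is_derive_eq.
  by rewrite -big_split /=; apply: eq_bigr => p _; rewrite mulrDr.
- rewrite (_ : ev (PM e1 e2) = ev e1 * ev e2); last by apply/funext.
  apply: is_derive_eq.
  rewrite /GRing.scale /= !mulr_sumr -big_split /=; apply: eq_bigr => p _.
  by ring.
Qed.

Existing Instance ev_is_derive.

Definition fld (E : nat -> pe) : V -> V := fun x => \row_(m < n) ev (E m) x.

Lemma fld_is_derive E (x v : V) :
  is_derive x v (fld E) (\row_(m < n) \sum_(p < n) coord v p * ev (D p (E m)) x).
Proof.
have ej : forall (i : 'I_1) (j : 'I_n), (fun y => fld E y i j) = ev (E j).
  by move=> i j; apply/funext => y; rewrite mxE.
have dv : derivable (fld E) x v.
  by apply/derivable_mxP => i j; rewrite ej; exact: ex_derive.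
apply: DeriveDef => //; rewrite derive_mx //; apply/matrixP => i j; rewrite !mxE ej; exact: derive_val.
Qed.

Existing Instance fld_is_derive.

Lemma derive_line (W : normedModType R) (f g : V -> W) (x v : V) :
  (forall h : R, f (h *: v + x) = g (h *: v + x)) -> derive f x v = derive g x v.
Proof.
move=> h; rewrite /derive.
have fx : f x = g x by have := h 0; rewrite scale0r add0r.
suff -> : (fun h0 : R => h0^-1 *: ((f \o shift x) (h0 *: v) - f x)) =
          (fun h0 : R => h0^-1 *: ((g \o shift x) (h0 *: v) - g x)) by [].
by apply/funext => t /=; rewrite h fx.
Qed.

Lemma derive_line_cst (W : normedModType R) (f : V -> W) (c : W) (x v : V) :
  (forall h : R, f (h *: v + x) = c) -> derive f x v = 0.
Proof.
move=> h; rewrite (@derive_line _ f (cst c)); first exact: derive_cst.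
by move=> t; rewrite h.
Qed.

Fixpoint psum (f : nat -> pe) (m : nat) : pe :=
  match m with 0 => PC 0 | m'.+1 => PA (psum f m') (f m') end.

Lemma ev_psum f m x : ev (psum f m) x = \sum_(p < m) ev (f p) x.
Proof. by elim: m => [|m IH] /=; rewrite ?big_ord0 // big_ord_recr /= IH. Qed.

Lemma vb_psum k f m : (forall p, (p < m)%N -> vb k (f p)) -> vb k (psum f m).
Proof. by elim: m => [|m IH] //= h; rewrite IH ?h // => p pm; apply: h; apply: ltnW. Qed.

Definition brk (A B : nat -> pe) (m : nat) : pe :=
  PA (psum (fun p => PM (A p) (D p (B m))) m)
     (PM (PC (-1)) (psum (fun p => PM (B p) (D p (A m))) m)).

Lemma sum_trunc m (F : nat -> R) : (m <= n)%N -> (forall p, (m <= p < n)%N -> F p = 0) ->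
  \sum_(p < n) F p = \sum_(p < m) F p.
Proof.
move=> mn h; rewrite (big_ord_widen n F mn) [RHS]big_mkcond /=; apply: eq_bigr => p _.
by case: ifP => // pm; rewrite h // ltn_ord leqNgt pm.
Qed.

Lemma brkE A B (x : V) : (forall m, (m < n)%N -> vb m (A m) && vb m (B m)) ->
  lie_bracket (fld A) (fld B) x = fld (brk A B) x.
Proof.
move=> h; rewrite /lie_bracket !derive_val; apply/matrixP => i m; rewrite !mxE /=.
have /andP[hA hB] := h _ (ltn_ord m).
rewrite !ev_psum mulN1r; congr (_ - _).
- rewrite (@sum_trunc m (fun p => coord (fld A x) p * ev (D p (B m)) x)) 1?ltnW //; last first.
    by move=> p /andP[mp _]; rewrite (D_zero _ hB mp) mulr0.
  apply: eq_bigr => p _; rewrite /=.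
  by rewrite /fld (coordE _ (widen_ord (ltnW (ltn_ord m)) p)) mxE.
- rewrite (@sum_trunc m (fun p => coord (fld B x) p * ev (D p (A m)) x)) 1?ltnW //; last first.
    by move=> p /andP[mp _]; rewrite (D_zero _ hA mp) mulr0.
  apply: eq_bigr => p _; rewrite /=.
  by rewrite /fld (coordE _ (widen_ord (ltnW (ltn_ord m)) p)) mxE.
Qed.

Lemma vb_brk A B m : (forall p, (p <= m)%N -> vb p (A p) && vb p (B p)) -> vb m (brk A B m).
Proof.
move=> h; have /andP[hA hB] := h m (leqnn m).
rewrite /= !vb_psum // => p pm /=; have /andP[hb1 hb2] := h p (ltnW pm);
  by rewrite ?(vb_le (ltnW pm) hb1) ?(vb_le (ltnW pm) hb2) D_vb.
Qed.

Definition pprod (M : seq nat) : pe := foldr (fun p e => PM (PV p) e) (PC 1) M.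

Lemma ev_pprod M x : ev (pprod M) x = \prod_(p <- M) coord x p.
Proof. by elim: M => [|p M IH] /=; rewrite ?big_nil ?big_cons ?IH. Qed.

Lemma vb_pprod k M : all (fun p => p < k)%N M -> vb k (pprod M).
Proof. by elim: M => //= p M IH /andP[-> /IH]. Qed.

Lemma D_pprod p M x : ev (D p (pprod M)) x = (count_mem p M)%:R * \prod_(q <- rem p M) coord x q.
Proof.
elim: M => [|q M IH] /=; first by rewrite mul0r.
rewrite IH ev_pprod; case: eqP => [->|qp] /=.
  rewrite mul1r natrD mulrDl mul1r; congr (_ + _).
  case: (boolP (p \in M)) => pM.
    by rewrite [in RHS](big_rem _ pM) /= mulrCA.
  by rewrite (count_memPn pM) !mul0r mulr0.
by rewrite mul0r add0r big_cons add0n mulrCA.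
Qed.

Definition Egen (c : nat -> R) (Ms : nat -> seq nat) (m : nat) : pe := PM (PC (c m)) (pprod (Ms m)).
Definition Fm c Ms := fld (Egen c Ms).

Lemma FmE c Ms x : Fm c Ms x = \row_(m < n) (c m * \prod_(p <- Ms m) coord x p).
Proof. by apply/matrixP => i j; rewrite !mxE /= ev_pprod. Qed.

Definition ek (p : nat) : V := \row_(j < n) ((j : nat) == p)%:R.

Lemma coord_ek p q : (q < n)%N -> coord (ek p) q = (q == p)%:R.
Proof. by move=> qn; rewrite (coordE _ (Ordinal qn)) mxE. Qed.

Lemma Fm_derive c Ms z p : (p < n)%N ->
  derive (Fm c Ms) z (ek p) = Fm (fun m => c m * (count_mem p (Ms m))%:R) (fun m => rem p (Ms m)) z.
Proof.
move=> pn; rewrite derive_val FmE; apply/matrixP => i m; rewrite !mxE.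
rewrite (bigD1 (Ordinal pn)) //= coord_ek // eqxx mul1r big1 ?addr0; last first.
  move=> q /eqP qp; rewrite coord_ek // ; case: eqP => [e|]; last by rewrite mul0r.
  by exfalso; apply: qp; apply: val_inj.
by rewrite /= mul0r add0r D_pprod mulrA.
Qed.

End Poly.

Lemma sind2 (P : nat -> Prop) : (forall l, (forall k, (k < l)%N -> P k) -> P l) -> forall l, P l.
Proof.
move=> h l; have : forall k, (k <= l)%N -> P k.
  elim: l => [|l IH] k.
    by rewrite leqn0 => /eqP ->; apply: h.
  rewrite leq_eqVlt => /orP[/eqP -> |]; last by apply: IH.
  by apply: h => k'; rewrite ltnS; apply: IH.
by apply.
Qed.

Section Flow.
Variable R : realType.
Variable n : nat.
Local Notation V := 'rV[R]_n.

Fixpoint peP (e : pe R) (qs : nat -> {poly R}) : {poly R} :=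
  match e with
  | PC c => c%:P
  | PV p => if (p < n)%N then qs p else 0
  | PA e1 e2 => peP e1 qs + peP e2 qs
  | PM e1 e2 => peP e1 qs * peP e2 qs
  end.

Lemma peP_horner e qs (t : R) : (peP e qs).[t] = ev e (\row_(j < n) (qs j).[t] : V).
Proof.
elim: e => [c|p|e1 IH1 e2 IH2|e1 IH1 e2 IH2] /=.
- by rewrite hornerC.
- case: (ltnP p n) => pn.
    by rewrite (coordE _ (Ordinal pn)) mxE.
  by rewrite coord_ge // horner0.
- by rewrite hornerD IH1 IH2.
- by rewrite hornerM IH1 IH2.
Qed.

Lemma peP_dep k e qs qs' : vb k e -> (forall j, (j < k)%N -> qs j = qs' j) -> peP e qs = peP e qs'.
Proof.
move=> h hj; elim: e h => [c|p|e1 IH1 e2 IH2|e1 IH1 e2 IH2] //=.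
- by move=> pk; rewrite hj.
- by move=> /andP[h1 h2]; rewrite IH1 // IH2.
- by move=> /andP[h1 h2]; rewrite IH1 // IH2.
Qed.

Definition pint (P : {poly R}) : {poly R} :=
  \poly_(i < (size P).+1) (if i is i'.+1 then P`_i' / i'.+1%:R else 0).

Lemma pint_deriv P : (pint P)^`() = P.
Proof.
apply/polyP => i; rewrite coef_deriv coef_poly ltnS.
case: ltnP => ip.
  have key : forall x : R, x / (i.+1)%:R *+ i.+1 = x.
    by move=> x; rewrite -mulr_natr divfK // pnatr_eq0.
  exact: key.
by rewrite nth_default // mul0rn.
Qed.

Lemma pint0 P : (pint P).[0] = 0.
Proof. by rewrite horner_coef0 coef_poly. Qed.

Variable E : nat -> pe R.
Hypothesis triE : forall m, (m < n)%N -> vb m (E m).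

Fixpoint qsb (x0 : V) (k : nat) : seq {poly R} :=
  match k with
  | 0 => [::]
  | k'.+1 => rcons (qsb x0 k') ((coord x0 k')%:P + pint (peP (E k') (nth 0 (qsb x0 k'))))
  end.

Lemma size_qsb x0 k : size (qsb x0 k) = k.
Proof. by elim: k => //= k IH; rewrite size_rcons IH. Qed.

Lemma qsb_nth x0 j k : (j < k)%N -> nth 0 (qsb x0 k) j = nth 0 (qsb x0 j.+1) j.
Proof.
elim: k => // k IH; rewrite ltnS leq_eqVlt => /orP[/eqP -> //|jk].
by rewrite /= nth_rcons size_qsb jk IH.
Qed.

Definition Q x0 j := nth 0 (qsb x0 j.+1) j.

Lemma QE x0 j : (j < n)%N -> Q x0 j = (coord x0 j)%:P + pint (peP (E j) (Q x0)).
Proof.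
move=> jn; rewrite /Q /= nth_rcons size_qsb ltnn eqxx; congr (_ + pint _).
apply: (peP_dep (triE jn)) => i ij.
by rewrite qsb_nth.
Qed.

Definition flw (t : R) (x0 : V) : V := \row_(j < n) (Q x0 j).[t].

Lemma flw_flow : is_flow (fld E) flw.
Proof.
move=> x0; split.
  apply/matrixP => i j; rewrite mxE (QE _ (ltn_ord j)) hornerD hornerC pint0 addr0.
  by rewrite (coordE _ j) (ord1 i).
move=> t.
have ej : forall (i : 'I_1) (j : 'I_n), (fun u => flw u x0 i j) = horner (Q x0 j).
  by move=> i j; apply/funext => u; rewrite mxE.
have dv : derivable (fun u => flw u x0) t 1.
  by apply/derivable_mxP => i j; rewrite ej; exact: derivable_horner.
apply: DeriveDef => //; rewrite derive_mx //; apply/matrixP => i j; rewrite !mxE ej.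
rewrite derive_val (QE _ (ltn_ord j)) derivD derivC add0r pint_deriv peP_horner.
by congr ev; apply/matrixP => i' j'; rewrite !mxE.
Qed.

Lemma flow_line phi (hf : is_flow (fld E) phi) (q : V) k : (k < n)%N ->
  (forall t, fld E (q + t *: @ek R n k) = @ek R n k) -> forall t, phi t q = q + t *: @ek R n k.
Proof.
move=> kn hk.
suff hc : forall m, (m < n)%N -> forall t, coord (phi t q) m = coord (q + t *: @ek R n k) m.
  move=> t; apply/matrixP => i j; rewrite (ord1 i) -!coordE; exact: hc.
elim/sind2 => m IH mn t.
pose j := Ordinal mn.
pose c := @ek R n k ord0 j.
have hd : forall u : R, is_derive u 1 (fun u : R => phi u q ord0 j) c.
  move=> u; have [_ hu] := hf q; have [du dval] := hu u.
  apply: DeriveDef; first by move/derivable_mxP: du; apply.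
  have := derive_mx du; rewrite dval => /(congr1 (fun M : 'M[R]_(1,n) => M ord0 j)).
  rewrite [in RHS]mxE => <-.
  transitivity (fld E (q + u *: @ek R n k) ord0 j); last by rewrite hk.
  rewrite /fld !mxE; apply: ev_dep (triE mn) _ => i im.
  by apply: IH => //; apply: ltn_trans im mn.
have hp : forall u : R, is_derive u 1 (horner (c *: 'X)) c.
  by move=> u; apply: is_derive_eq; rewrite derivZ derivX hornerZ hornerC mulr1.
have h0 : forall u : R, is_derive u 1 ((fun u => phi u q ord0 j) - horner (c *: 'X)) 0.
  by move=> u; apply: is_derive_eq; rewrite subrr.
have := @is_derive_0_is_cst R _ t 0 h0.
move=> e0; have {e0} : phi t q ord0 j - (c *: 'X).[t] = phi 0 q ord0 j - (c *: 'X).[0] by exact: e0.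
rewrite !hornerZ !hornerX mulr0 subr0 (proj1 (hf q)) => e.
rewrite (coordE _ j) (coordE _ j) mxE [X in _ + X]mxE -/c.
by rewrite -e; ring.
Qed.
End Flow.

Section Scalar.
Variable R : realType.
Variable n : nat.
Local Notation V := 'rV[R]_n.

Definition stS (p : nat) (cm : R * seq nat) : R * seq nat :=
  (- (cm.1 * (count_mem p cm.2)%:R), rem p cm.2).

Lemma stS0 L M : (foldl (fun cm p => stS p cm) (0, M) L).1 = 0.
Proof. by elim: L M => //= p L IH M; rewrite /stS /= mul0r oppr0; exact: IH. Qed.

Lemma stS_zero (y : V) l L c M : (forall j, (j < l)%N -> coord y j = 0) ->
  (exists j, (j < l)%N /\ count_mem j M <> count_mem j L) ->
  (foldl (fun cm p => stS p cm) (c, M) L).1 *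
    \prod_(p <- (foldl (fun cm p => stS p cm) (c, M) L).2) coord y p = 0.
Proof.
move=> hy; elim: L c M => [|x L IH] c M /= [j [jl hj]].
  have jM : j \in M by rewrite -has_pred1 has_count lt0n; apply/eqP.
  by rewrite (big_rem _ jM) /= hy // mul0r mulr0.
case: (boolP (x \in M)) => xM; last first.
  by rewrite /stS /= (count_memPn xM) mulr0 oppr0 stS0 mul0r.
apply: IH; exists j; split => //; rewrite /stS /= count_mem_rem.
have cx : (0 < count_mem x M)%N by rewrite -has_count has_pred1.
move: hj; case: eqP => [<-|ne] /=.
  by move: (count_mem x M) (count_mem x L) cx => u v; lia.
by move: (count_mem j M) (count_mem j L) => u v; lia.
Qed.

Lemma prod_fact_cons x L : (x < n)%N ->
  (\prod_(j < n) (count_mem (j : nat) (x :: L))`!)%N =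
  ((count_mem x L).+1 * \prod_(j < n) (count_mem (j : nat) L)`!)%N.
Proof.
move=> xn; rewrite (bigD1 (Ordinal xn)) //= [in RHS](bigD1 (Ordinal xn)) //= eqxx add1n factS mulnA.
congr (_ * _)%N; apply: eq_bigr => j /eqP ne; congr (_`!); rewrite /=.
have -> : (x == j) = false by apply/eqP => e; apply: ne; apply: val_inj.
by rewrite add0n.
Qed.

Lemma stS_self c L : all (fun p => p < n)%N L ->
  foldl (fun cm p => stS p cm) (c, L) L =
  (c * (-1) ^+ size L * ((\prod_(j < n) (count_mem (j : nat) L)`!)%N)%:R, [::]).
Proof.
elim: L c => [|x L IH] c /=.
  by rewrite expr0 mulr1 big1 ?mulr1 // => j _.
move=> /andP[xn aL]; have pf := prod_fact_cons L xn; rewrite /= in pf.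
rewrite /stS /= eqxx add1n IH // pf natrM exprS.
congr pair; set u := _%:R; set v := _%:R; set w := (-1) ^+ _.
clearbody u v w; ring.
Qed.

Lemma stS_comp (c : nat -> R) (Ms : nat -> seq nat) L m :
  let F := foldl (fun cm p => (fun m => - (cm.1 m * (count_mem p (cm.2 m))%:R), fun m => rem p (cm.2 m))) (c, Ms) L in
  (F.1 m, F.2 m) = foldl (fun cm p => stS p cm) (c m, Ms m) L.
Proof. by elim: L c Ms => //= p L IH c Ms; rewrite IH. Qed.

End Scalar.

Section Main.
Variable R : realType.
Variables (r s n : nat) (a b : nat -> nat).
Hypothesis H : is_hall_basis r s n a b.
Local Notation V := 'rV[R]_n.
Local Notation hg := (@hgg R n r a b).
Local Notation hsn := (hs r a b).
Local Notation Tn := (T r a b).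

Lemma hgg_fuel_S f l : @hgg_fuel R n r a b f.+1 l =
  if (l < r)%N then @hgg_gen R n r a b l
  else lie_bracket (@hgg_fuel R n r a b f (a l)) (@hgg_fuel R n r a b f (b l)).
Proof. by []. Qed.

Lemma hgg_fuel_eq f1 f2 l : (l < n)%N -> (l < f1)%N -> (l < f2)%N ->
  @hgg_fuel R n r a b f1 l = @hgg_fuel R n r a b f2 l.
Proof.
elim: f1 f2 l => [//|f1 IH] [//|f2] l ln l1 l2.
rewrite !hgg_fuel_S; case: ifP => lr; first by [].
have rl : (r <= l)%N by rewrite leqNgt lr.
have h1 := habB H rl ln; have h2 := habA H rl ln.
have an : (a l < n)%N by apply: ltn_trans h2 ln.
have bn : (b l < n)%N by apply: ltn_trans h1 an.
have al1 : (a l < f1)%N by apply: leq_trans h2 _; rewrite -ltnS.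
have al2 : (a l < f2)%N by apply: leq_trans h2 _; rewrite -ltnS.
have bl1 : (b l < f1)%N by apply: ltn_trans h1 al1.
have bl2 : (b l < f2)%N by apply: ltn_trans h1 al2.
rewrite (IH f2 (a l) an al1 al2) (IH f2 (b l) bn bl1 bl2); reflexivity.
Qed.

Lemma hggE l : (r <= l)%N -> (l < n)%N -> hg l = lie_bracket (hg (a l)) (hg (b l)).
Proof.
move=> rl ln; rewrite /hgg hgg_fuel_S ifF; last by apply/negbTE; rewrite -leqNgt.
have h1 := habB H rl ln; have h2 := habA H rl ln.
have an : (a l < n)%N by apply: ltn_trans h2 ln.
have bn : (b l < n)%N by apply: ltn_trans h1 an.
have bl : (b l < l)%N by apply: ltn_trans h1 h2.
rewrite (@hgg_fuel_eq l (a l).+1 (a l) an h2 (ltnSn _)) (@hgg_fuel_eq l (b l).+1 (b l) bn bl (ltnSn _)).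
reflexivity.
Qed.

Lemma hggG l : (l < r)%N -> hg l = @hgg_gen R n r a b l.
Proof. by move=> lr; rewrite /hgg hgg_fuel_S lr. Qed.

Definition c0 l m : R :=
  if prefix [:: head 0%N (hsn l)] (hsn m) then
    (-1) ^+ size (Tn m) / ((\prod_(j < n) (count_mem (j : nat) (Tn m))`!)%N)%:R
  else 0.

Lemma hgg_genE l : (l < r)%N -> (l < n)%N -> forall x : V, @hgg_gen R n r a b l x = Fm (c0 l) Tn x.
Proof.
move=> lr ln x; rewrite FmE; apply/matrixP => i m; rewrite !mxE /c0.
have -> : hstring r a b l = [:: head 0%N (hsn l)] by rewrite -/(hs r a b l) (T_gen H lr ln).
rewrite -/(hs r a b m); case: ifP => _ //; by rewrite mul0r.
Qed.

Lemma hrep l : (l < n)%N -> exists E : nat -> pe R, hg l = fld E /\ forall m, (m < n)%N -> vb m (E m).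
Proof.
elim/sind2: l => l IH ln.
case: (ltnP l r) => lr.
  exists (Egen (c0 l) Tn); split.
    by apply/funext => x; rewrite hggG // hgg_genE.
  move=> m mn; rewrite /= vb_pprod //.
  by have [_ ? _ _] := hs_props H mn.
have h1 := habB H lr ln; have h2 := habA H lr ln.
have an : (a l < n)%N by apply: ltn_trans h2 ln.
have bn : (b l < n)%N by apply: ltn_trans h1 an.
have [EA [hA tA]] := IH _ h2 an.
have [EB [hB tB]] := IH _ (ltn_trans h1 h2) bn.
exists (brk EA EB); split.
  apply/funext => x; rewrite hggE // hA hB brkE // => m mn.
  by rewrite tA // tB.
move=> m mn; apply: vb_brk => p pm.
by rewrite tA ?tB //; apply: leq_ltn_trans pm mn.
Qed.

Definition stN (p : nat) (cm : (nat -> R) * (nat -> seq nat)) :=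
  (fun m => - (cm.1 m * (count_mem p (cm.2 m))%:R), fun m => rem p (cm.2 m)).

Definition csN l := foldl (fun cm p => stN p cm) (c0 l, Tn) (Tn l).

Definition kk l := if (l < r)%N then 0%N else b l.

Definition Rp l := forall y : V, (forall j, (j < kk l)%N -> coord y j = 0) ->
  hg l y = Fm (csN l).1 (csN l).2 y.
Definition Vp l := forall y : V, (forall j, (j < l)%N -> coord y j = 0) -> hg l y = ek R n l.

Lemma RV l : (l < n)%N -> Rp l -> Vp l.
Proof.
move=> ln HR y hy.
have kl : (kk l <= l)%N.
  rewrite /kk; case: ifP => // lr.
  have rl : (r <= l)%N by rewrite leqNgt lr.
  by apply: ltnW; apply: ltn_trans (habB H rl ln) (habA H rl ln).
rewrite HR; last by move=> j jk; apply: hy; apply: leq_trans jk kl.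
rewrite FmE; apply/matrixP => i m; rewrite !mxE.
have e := stS_comp (c0 l) Tn (Tn l) m; rewrite -/(csN l) in e.
have e1 : (csN l).1 m = (foldl (fun cm p => stS p cm) (c0 l m, Tn m) (Tn l)).1 by rewrite -e.
have e2 : (csN l).2 m = (foldl (fun cm p => stS p cm) (c0 l m, Tn m) (Tn l)).2 by rewrite -e.
rewrite e1 e2 {e e1 e2}.
have hl := hs_cons H ln.
case hp : (prefix [:: head 0%N (hsn l)] (hsn m)); last first.
  rewrite /c0 hp stS0 mul0r; case: eqP => // e.
  have pl : prefix [:: head 0%N (hsn l)] (hsn l) by rewrite {2}hl prefix_cons eqxx prefix0s.
  by move: hp; rewrite e pl.
have hm := hs_cons H (ltn_ord m).
have ehd : head 0%N (hsn m) = head 0%N (hsn l).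
  by move: hp; rewrite hm prefix_cons => /andP[/eqP e _]; rewrite e.
case: (boolP [exists j : 'I_l, count_mem (j : nat) (Tn m) != count_mem (j : nat) (Tn l)]).
  move=> /existsP[j /eqP hj].
  rewrite (@stS_zero R n y l (Tn l) (c0 l m) (Tn m) hy); last by exists j; split.
  case: eqP => // e; exfalso; apply: hj; rewrite e //.
move=> /existsPn hno.
have ml : (m : nat) = l.
  apply: (hs_eq H (ltn_ord m) ln ehd) => j jl.
  by have := hno (Ordinal jl); rewrite negbK => /eqP.
have [_ al _ _] := hs_props H ln.
rewrite ml eqxx (@stS_self R n); last by apply/allP => x /(allP al) xl; apply: ltn_trans xl ln.
rewrite /= big_nil mulr1 /c0 ifT; last by rewrite {2}hl prefix_cons eqxx prefix0s.
set F := ((\prod_(j < n) (count_mem (j : nat) (Tn l))`!)%N)%:R.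
have F0 : F != 0 :> R.
  by rewrite pnatr_eq0 -lt0n prodn_gt0 // => j; rewrite fact_gt0.
by rewrite mulrAC divfK // -exprD -signr_odd oddD addbb expr0.
Qed.

Lemma coord_lin (h : R) (v z : V) j : coord (h *: v + z) j = h * coord v j + coord z j.
Proof.
case: (ltnP j n) => jn.
  by rewrite !(coordE _ (Ordinal jn)) !mxE.
by rewrite !coord_ge // mulr0 addr0.
Qed.

Lemma coord0 j : coord (0 : V) j = 0.
Proof.
case: (ltnP j n) => jn; last by rewrite coord_ge.
by rewrite (coordE _ (Ordinal jn)) mxE.
Qed.

Lemma RVall l : (l < n)%N -> Rp l /\ Vp l.
Proof.
elim/sind2: l => l IH ln.
suff hR : Rp l by split => //; apply: RV.
case: (ltnP l r) => lr.
  move=> y _; rewrite hggG // hgg_genE //.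
  have Tl : Tn l = [::] by rewrite /T (T_gen H lr ln).
  by rewrite /csN Tl.
have h1 := habB H lr ln; have h2 := habA H lr ln; have h3 := habC H lr ln.
have an : (a l < n)%N by apply: ltn_trans h2 ln.
have bn : (b l < n)%N by apply: ltn_trans h1 an.
have [Ra Va] := IH _ h2 an.
have [_ Vb] := IH _ (ltn_trans h1 h2) bn.
have [EA [hA tA]] := hrep an.
move=> z; rewrite /kk ifF; last by apply/negbTE; rewrite -leqNgt.
move=> hz.
rewrite hggE // /lie_bracket (Vb z hz).
have d1 : derive (hg (b l)) z (hg (a l) z) = 0.
  apply: (@derive_line_cst _ _ _ _ (ek R n (b l))) => h; apply: Vb => j jb.
  rewrite coord_lin hz // addr0.
  have jn : (j < n)%N by apply: ltn_trans jb bn.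
  have -> : coord (hg (a l) z) j = coord (hg (a l) 0) j.
    rewrite hA !(coordE _ (Ordinal jn)) !mxE; apply: ev_dep (tA _ jn) _ => i ij.
    rewrite hz; first by rewrite !coord0.
    by apply: ltn_trans ij jb.
  rewrite (Va 0); last by move=> i _; rewrite coord0.
  rewrite coord_ek //; case: eqP => [e|]; last by rewrite mulr0.
  by move: jb; rewrite e ltnNge ltnW.
have d2 : derive (hg (a l)) z (ek R n (b l)) =
   Fm (fun m => (csN (a l)).1 m * (count_mem (b l) ((csN (a l)).2 m))%:R)
      (fun m => rem (b l) ((csN (a l)).2 m)) z.
  rewrite -Fm_derive //; apply: derive_line => h; apply: Ra => j jk.
  have jb : (j < b l)%N.
    move: jk; rewrite /kk; case: ifP => //= alr jk.
    apply: leq_trans jk (h3 _); by rewrite leqNgt alr.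
  rewrite coord_lin hz // addr0 coord_ek ?(ltn_trans jb bn) //.
  by case: eqP => [e|]; [move: jb; rewrite e ltnn|rewrite mulr0].
rewrite d1 d2 sub0r.
have [eT eh] := T_rec H lr ln.
have -> : csN l = stN (b l) (csN (a l)).
  rewrite /csN eT foldl_rcons; congr (stN _ (foldl _ (_, _) _)).
  by apply/funext => m; rewrite /c0 eh.
by rewrite !FmE; apply/matrixP => i m; rewrite !mxE /= mulNr.
Qed.

End Main.

Unset Implicit Arguments. Set Strict Implicit.

Definition wv (R : realType) (n : nat) (x : 'rV[R]_n) (k : nat) : 'rV[R]_n :=
  \row_(j < n) (if (k <= j)%N then x ord0 j else 0).

Arguments wv {R n}.

Theorem proposition3p5 (R : realType) (r s n : nat) (a b : nat -> nat) :
  is_hall_basis r s n a b ->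
  (forall i, (i < n)%N ->
     exists phi : R -> 'rV[R]_n -> 'rV[R]_n, is_flow (@hgg R n r a b i) phi) /\
  (forall phi : nat -> R -> 'rV[R]_n -> 'rV[R]_n,
     (forall i, (i < n)%N -> is_flow (@hgg R n r a b i) (phi i)) ->
     forall x : 'rV[R]_n, Psi phi x = x).
Proof.
move=> H; split.
  move=> i iN; have [E [hE tE]] := hrep R H iN.
  by exists (flw E); rewrite hE; exact: flw_flow.
move=> phi hphi x.
suff hw : forall d, (d <= n)%N ->
    foldr (fun i acc => phi i (coord x i) acc) 0 (iota (n - d)%N d) = wv x (n - d)%N.
  rewrite /Psi -[in iota 0 n](subnn n) hw // subnn.
  by apply/matrixP => i j; rewrite /wv mxE (ord1 i).
elim=> [|d IH] dn.
  by rewrite subn0; apply/matrixP => i j; rewrite !mxE leqNgt ltn_ord.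
have kn : (n - d.+1 < n)%N by rewrite -subn_gt0 subKn // ltnW.
have -> : iota (n - d.+1)%N d.+1 = (n - d.+1)%N :: iota (n - d)%N d.
  by rewrite /= subnSK.
rewrite [foldr _ _ (_ :: _)]/= (IH (ltnW dn)).
set k := (n - d.+1)%N.
have kS : (n - d)%N = k.+1 by rewrite /k subnSK.
rewrite kS.
have [E [hE tE]] := hrep R H kn.
have [_ Vk] := RVall R H kn.
have hf := hphi _ kn; rewrite hE in hf.
rewrite (flow_line tE hf kn).
  apply/matrixP => i j; rewrite /wv !mxE (coordE _ (Ordinal kn)).
  case: (ltngtP k j) => [kj|jk|kj].
  - by rewrite mulr0 addr0.
  - by rewrite mulr0 addr0.
  - by rewrite mulr1 add0r; congr (x _ _); apply: val_inj.
move=> t; rewrite -hE; apply: Vk => j jk.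
rewrite addrC (coord_lin t) coord_ek; last by apply: ltn_trans jk kn.
rewrite (coordE _ (Ordinal (ltn_trans jk kn))) /wv mxE leqNgt ltnS (ltnW jk) /=.
by case: eqP => [e|]; [move: jk; rewrite e ltnn|rewrite mulr0 addr0].
Qed.
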